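(* Let $r\ge1$ and $m\in\{0,1,\dots,5\}$, and let $A=6r^2+2mr+(m-2)\mathbb 1_{\{m>0\}}$. Then every polyiamond of area $A$ whose edge-perimeter is minimal among polyiamonds of area $A$ is a quasi-regular hexagon.
   Context: Faces are the closed triangular faces of the triangular lattice $\mathbb T^2$ in $\mathbb R^2$. A polyiamond $P$ is a finite nonempty union of faces that is connected through shared edges (two faces sharing only a vertex are not adjacent); faces not in $P$ are empty faces. Its area $\|P\|$ is the number of its faces; its edge-perimeter $p(P)$ is the number of edges of $\mathbb T^2$ separating a face of $P$ from an empty face; its site-perimeter $s(P)$ is the number of empty faces sharing at least one edge with a face of $P$. For integers $d\ge1$, $a,b,c\ge0$ with $a+b,b+c,c+a\le d$, $T^d_{a,b,c}$ is the polyiamond obtained from an equilateral triangle of side length $d$ with sides on lattice lines (the union of its $d^2$ faces) by removing the equilateral sub-triangles of side lengths $a,b,c$ at its three corners; its boundary is a (possibly degenerate) hexagon with side lengths, in cyclic order, $a,\ d-a-b,\ b,\ d-b-c,\ c,\ d-c-a$, its area is $d^2-a^2-b^2-c^2$ and its edge- and site-perimeter equal $3d-a-b-c$. Quasi-regular hexagons: for $r\ge1$ let $E(r)=T^{3r}_{r,r,r}$ (regular hexagon of side $r$), $E_{B_1}(r)=T^{3r}_{r-1,r,r}$, $E_{B_2}(r)=T^{3r+1}_{r,r,r+1}$, $E_{B_3}(r)=T^{3r+1}_{r,r,r}$, $E_{B_4}(r)=T^{3r+2}_{r,r+1,r+1}$, $E_{B_5}(r)=T^{3r+2}_{r,r,r+1}$.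 Their areas are $6r^2,\ 6r^2+2r-1,\ 6r^2+4r,\ 6r^2+6r+1,\ 6r^2+8r+2,\ 6r^2+10r+3$, and their edge-perimeters are $6r,6r+1,\dots,6r+5$. A quasi-regular hexagon is any image of one of these under a symmetry (translation, rotation, reflection) of $\mathbb T^2$; $\mathcal Q$ denotes the set of all quasi-regular hexagons. *)

(* Defs.v *)
From mathcomp Require Import all_boot all_order all_algebra.
From mathcomp Require Import finmap.
Set Implicit Arguments. Unset Strict Implicit. Unset Printing Implicit Defensive.
Import Order.TTheory GRing.Theory Num.Theory.
Local Open Scope fset_scope.

(* Vertices of T^2 are the integer
   combinations x*e1 + y*e2 of two unit vectors at 60 degrees.
   (x, y, true)  = up   face with vertices (x,y), (x+1,y), (x,y+1);
   (x, y, false) = down face with vertices (x+1,y), (x,y+1), (x+1,y+1). *)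
Definition face : Type := (int * int * bool)%type.

Definition upf (x y : int) : face := (x, y, true).
Definition dnf (x y : int) : face := (x, y, false).

Definition neighbors (f : face) : seq face :=
  let: (x, y, o) := f in
  if o then [:: dnf x y; dnf (x - 1)%R y; dnf x (y - 1)%R]
  else [:: upf x y; upf (x + 1)%R y; upf x (y + 1)%R].

Definition adj (f g : face) : bool := g \in neighbors f.

Definition edge_connected (P : {fset face}) : Prop :=
  forall f g, f \in P -> g \in P ->
    exists s : seq face, [/\ path adj f s, last f s = g & all (fun h => h \in P) s].

Definition polyiamond (P : {fset face}) : Prop := P != fset0 /\ edge_connected P.

Definition area (P : {fset face}) : nat := #|` P|.

(* Edge-perimeter: number of lattice edges separating a face of P from an empty
   face.  Every edge borders exactly two faces (which are neighbors), so such an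
   edge is counted exactly once below, from its side lying in P. *)
Definition edge_perimeter (P : {fset face}) : nat :=
  \sum_(f <- P) count (fun g => g \notin P) (neighbors f).

(* T^d_{a,b,c}: the triangle with vertices (0,0), (d,0), (0,d) minus the corner
   triangles of side a (at (0,0)), b (at (d,0)) and c (at (0,d)). *)
Definition inT (d a b c : nat) (i j : nat) (o : bool) : bool :=
  let s := (i + j + (if o then 1 else 2))%N in
  [&& s <= d, ~~ (s <= a), i < d - b & j < d - c].

Definition Tface_seq (d a b c : nat) : seq face :=
  flatten [seq flatten [seq [seq ((Posz i, Posz j, o) : face)
                               | o <- [:: true; false] & inT d a b c i j o]
                       | j <- iota 0 d]
          | i <- iota 0 d].

Definition Tset (d a b c : nat) : {fset face} := [fset f | f in Tface_seq d a b c].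

(* Symmetries of T^2: rotation by 60 degrees about the vertex (0,0),
   reflection in the line y = x, translations by lattice vectors. *)
Definition rot (f : face) : face :=
  let: (x, y, o) := f in
  if o then dnf (- y - 1)%R (x + y)%R else upf (- y - 1)%R (x + y + 1)%R.
Definition refl (f : face) : face := let: (x, y, o) := f in (y, x, o).
Definition transl (s t : int) (f : face) : face :=
  let: (x, y, o) := f in ((x + s)%R, (y + t)%R, o).

Definition lattice_sym (n : nat) (b : bool) (s t : int) (f : face) : face :=
  transl s t (iter n rot (if b then refl f else f)).

Definition qrhex (r k : nat) : {fset face} :=
  match k with
  | 0 => Tset (3 * r) r r r
  | 1 => Tset (3 * r) r.-1 r r
  | 2 => Tset (3 * r).+1 r r r.+1
  | 3 => Tset (3 * r).+1 r r r
  | 4 => Tset (3 * r).+2 r r.+1 r.+1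
  | _ => Tset (3 * r).+2 r r r.+1
  end.

Definition quasi_regular (P : {fset face}) : Prop :=
  exists r k n b s t, [/\ (1 <= r)%N, (k <= 5)%N &
    P = [fset lattice_sym n b s t f | f in qrhex r k]].

Definition min_perimeter_polyiamond (A : nat) (P : {fset face}) : Prop :=
  [/\ polyiamond P, area P = A &
      forall Q, polyiamond Q -> area Q = A -> (edge_perimeter P <= edge_perimeter Q)%N].

(* A = 6 r^2 + 2 m r + (m - 2) * 1_{m > 0}; for m > 0 this is >= 7, so the
   natural-number subtraction below never truncates. *)
Definition areaA (r m : nat) : nat :=
  if m == 0%N then (6 * r ^ 2)%N else (6 * r ^ 2 + 2 * m * r + m - 2)%N.

Example test_E1 : size (Tface_seq 3 1 1 1) = 6%N. Proof. by vm_compute. Qed.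
Example test_EB5 : size (Tface_seq 5 1 1 2) = 19%N. Proof. by vm_compute. Qed.
Example test_EB1_2 : size (Tface_seq 6 1 2 2) = 27%N. Proof. by vm_compute. Qed.

(* Main.v *)
Require Import Defs.
From mathcomp Require Import all_boot all_order all_algebra.
From mathcomp Require Import finmap zify ring.
Set Implicit Arguments. Unset Strict Implicit. Unset Printing Implicit Defensive.
Import Order.TTheory GRing.Theory Num.Theory.
Local Open Scope ring_scope.

Definition fX (f : face) : int := f.1.1.
Definition fY (f : face) : int := f.1.2.
Definition fZ (f : face) : int := f.1.1 + f.1.2 + (if f.2 then 0 else 1).

Definition nZ (f : face) : face :=
  let: (x, y, o) := f in if o then dnf x y else upf x y.
Definition nX (f : face) : face :=
  let: (x, y, o) := f in if o then dnf (x - 1) y else upf (x + 1) y.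
Definition nY (f : face) : face :=
  let: (x, y, o) := f in if o then dnf x (y - 1) else upf x (y + 1).

Lemma neighborsE f : neighbors f = [:: nZ f; nX f; nY f].
Proof. by case: f => [[x y] []]. Qed.

Inductive fam := FX | FY | FZ.

Definition key k (f : face) : int :=
  match k with FX => fX f | FY => fY f | FZ => fZ f end.
Definition pos k (f : face) : int :=
  match k with FX => fY f + fZ f | FY => fX f + fZ f | FZ => fX f - fY f end.
Definition suc k (f : face) : face :=
  match k with
  | FX => if f.2 then nZ f else nY f
  | FY => if f.2 then nZ f else nX f
  | FZ => if f.2 then nY f else nX f end.
Definition prd k (f : face) : face :=
  match k with
  | FX => if f.2 then nY f else nZ f
  | FY => if f.2 then nX f else nZ f
  | FZ => if f.2 then nX f else nY f end.

Ltac dface f := let x := fresh "x" in let y := fresh "y" in let o := fresh "o" in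
  case: f => [[x y] o].

Lemma key_suc k f : key k (suc k f) = key k f.
Proof. case: k; case: f => [[x y] []]; rewrite /= /fX /fY /fZ /=; lia. Qed.
Lemma key_prd k f : key k (prd k f) = key k f.
Proof. case: k; case: f => [[x y] []]; rewrite /= /fX /fY /fZ /=; lia. Qed.
Lemma pos_suc k f : pos k (suc k f) = pos k f + 1.
Proof. case: k; case: f => [[x y] []]; rewrite /= /fX /fY /fZ /=; lia. Qed.
Lemma pos_prd k f : pos k (prd k f) = pos k f - 1.
Proof. case: k; case: f => [[x y] []]; rewrite /= /fX /fY /fZ /=; lia. Qed.

Lemma key_pos_inj k f g : key k f = key k g -> pos k f = pos k g -> f = g.
Proof.
case: k; case: f => [[x y] o]; case: g => [[x' y'] o'];
  case: o; case: o'; rewrite /= /fX /fY /fZ /= => h1 h2;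
  (have [-> ->] : x = x' /\ y = y' by lia) => //; exfalso; lia.
Qed.

Definition out k (S : {fset face}) f : nat :=
  ((suc k f \notin S) + (prd k f \notin S))%N.

Lemma perim2 (S : {fset face}) :
  (edge_perimeter S * 2 = \sum_(f <- S) out FX S f + \sum_(f <- S) out FY S f
     + \sum_(f <- S) out FZ S f)%N.
Proof.
rewrite /edge_perimeter big_distrl -!big_split /=; apply: eq_bigr => f _.
rewrite neighborsE /out /=; case: f => [[x y] []] /=;
  case: (_ \notin S); case: (_ \notin S); case: (_ \notin S) => //.
Qed.

Lemma iter_step k (h : face -> face) c f n :
  (forall g, key k (h g) = key k g) -> (forall g, pos k (h g) = pos k g + c) ->
  key k (iter n h f) = key k f /\ pos k (iter n h f) = pos k f + n%:Z * c.
Proof.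
move=> hk hp; elim: n => [|n [IHk IHp]] /=; first by split=> //; lia.
rewrite hk hp IHk IHp; split=> //; lia.
Qed.

Lemma exists_end k (h : face -> face) c (S : {fset face}) f :
  c != 0 -> (forall g, key k (h g) = key k g) -> (forall g, pos k (h g) = pos k g + c) ->
  f \in S -> exists2 g, g \in S & (key k g = key k f) /\ (h g \notin S).
Proof.
move=> c0 hk hp fS.
case: (boolP (has (fun g => (key k g == key k f) && (h g \notin S)) S)).
  by move/hasP => [g gS /andP [/eqP e n]]; exists g.
move/hasPn => H; exfalso.
have inS n : iter n h f \in S.
  elim: n => [|n IH] //=.
  have := H _ IH; have [-> _] := iter_step f n hk hp.
  by rewrite eqxx /= negbK.
pose s := [seq iter i h f | i <- iota 0 (size S).+1].
have us : uniq s.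
  rewrite map_inj_in_uniq ?iota_uniq // => i j _ _ e.
  have [_ pi] := iter_step f i hk hp; have [_ pj] := iter_step f j hk hp.
  have : pos k (iter i h f) = pos k (iter j h f) by rewrite e.
  rewrite pi pj => e2.
  have : (i%:Z - j%:Z) * c = 0 by lia.
  move/eqP; rewrite mulf_eq0 (negbTE c0) orbF subr_eq0 => /eqP; lia.
have sub : {subset s <= S} by move=> g /mapP [i _ ->].
by have := uniq_leq_size us sub; rewrite size_map size_iota ltnn.
Qed.

Lemma strip_ge2 k (S : {fset face}) v :
  (exists2 f, f \in S & key k f = v) ->
  (2 <= \sum_(f <- S | key k f == v) out k S f)%N.
Proof.
move=> [f fS fv].
rewrite /out big_split /=.
have one (h : face -> face) c : c != 0 -> (forall g, key k (h g) = key k g) ->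
   (forall g, pos k (h g) = pos k g + c) ->
   (1 <= \sum_(g <- S | key k g == v) (h g \notin S))%N.
  move=> c0 hk hp; have [g gS [gk gn]] := exists_end c0 hk hp fS.
  rewrite big_mkcond (bigD1_seq g) ?fset_uniq //= gk fv eqxx gn.
  by rewrite leq_addr.
rewrite -[2%N]/(1 + 1)%N leq_add //.
  by apply: (one _ 1) => //; [exact: key_suc | exact: pos_suc].
by apply: (one _ (-1)) => //; [exact: key_prd | move=> g; rewrite pos_prd].
Qed.

Lemma sum_strips k (S : {fset face}) (F : face -> nat) lo n :
  (forall f, f \in S -> lo <= key k f < lo + n%:Z) ->
  (\sum_(f <- S) F f = \sum_(i < n) \sum_(f <- S | key k f == (lo + i%:Z)%R) F f)%N.
Proof.
move=> hS.
under [RHS]eq_bigr do rewrite big_mkcond.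
rewrite exchange_big /=; rewrite big_seq [RHS]big_seq; apply: eq_bigr => f fS.
have [h1 h2] : lo <= key k f /\ key k f < lo + n%:Z by move/andP: (hS f fS).
have i0n : (absz (key k f - lo) < n)%N by lia.
rewrite (bigD1 (Ordinal i0n)) //= ifT; last by apply/eqP; lia.
rewrite big1 ?addn0 // => i ni; rewrite ifF //; apply/negbTE/eqP => e.
move/eqP: ni; apply; apply: val_inj => /=; lia.
Qed.

Lemma fam_lower k (S : {fset face}) lo n :
  (forall f, f \in S -> lo <= key k f < lo + n%:Z) ->
  (forall i : nat, (i < n)%N -> exists2 f, f \in S & key k f = lo + i%:Z) ->
  (2 * n <= \sum_(f <- S) out k S f)%N.
Proof.
move=> hr hn; rewrite (sum_strips (out k S) hr).
have -> : (2 * n = \sum_(i < n) 2)%N by rewrite sum_nat_const card_ord mulnC.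
apply: leq_sum => i _; apply: strip_ge2; exact: hn.
Qed.

Lemma fam_upper k (S : {fset face}) lo n :
  (forall f, f \in S -> lo <= key k f < lo + n%:Z) ->
  (forall v, (\sum_(f <- S | key k f == v) out k S f <= 2)%N) ->
  (\sum_(f <- S) out k S f <= 2 * n)%N.
Proof.
move=> hr hv; rewrite (sum_strips (out k S) hr).
have -> : (2 * n = \sum_(i < n) 2)%N by rewrite sum_nat_const card_ord mulnC.
by apply: leq_sum => i _.
Qed.

Lemma sum_bool_count (T : eqType) (s : seq T) (A B : pred T) :
  (\sum_(x <- s | A x) (B x : nat) = count (fun x => A x && B x) s)%N.
Proof.
elim: s => [|x s IH]; first by rewrite big_nil.
by rewrite big_cons /= IH; case: (A x); case: (B x).
Qed.

Lemma count_le1 (T : eqType) (s : seq T) (P : pred T) :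
  uniq s -> (forall x y, x \in s -> y \in s -> P x -> P y -> x = y) ->
  (count P s <= 1)%N.
Proof.
elim: s => [|x s IH] //= /andP [xs us] H.
case Px: (P x) => /=.
  have -> : count P s = 0%N.
    apply/eqP; rewrite -leqn0 leqNgt -has_count; apply/hasP => [[y ys Py]].
    have e := H x y (mem_head _ _) (mem_behead (ys : y \in behead (x :: s))) Px Py.
    by move: xs; rewrite e ys.
  by [].
apply: IH => // a b ha hb; apply: H; by rewrite inE ?ha ?hb orbT.
Qed.

Lemma strip_le2 k (S : {fset face}) v :
  (forall f g, f \in S -> g \in S -> key k f = key k g -> pos k f < pos k g ->
      suc k f \in S /\ prd k g \in S) ->
  (\sum_(f <- S | key k f == v) out k S f <= 2)%N.
Proof.
move=> hc; rewrite /out big_split /= !sum_bool_count.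
rewrite -[2%N]/(1 + 1)%N leq_add //; apply: count_le1; rewrite ?fset_uniq //;
  move=> f g fS gS /andP [/eqP fk fn] /andP [/eqP gk gn];
  (have kfg : key k f = key k g by rewrite fk gk); apply: (key_pos_inj kfg);
  (case: (ltrgtP (pos k f) (pos k g)) => // lt; exfalso);
  [ have [h _] := hc _ _ fS gS kfg lt; by rewrite h in fn
  | have [h _] := hc _ _ gS fS (esym kfg) lt; by rewrite h in gn
  | have [_ h] := hc _ _ fS gS kfg lt; by rewrite h in gn
  | have [_ h] := hc _ _ gS fS (esym kfg) lt; by rewrite h in fn ].
Qed.

Lemma adj_key k f h : adj f h -> key k f - 1 <= key k h <= key k f + 1.
Proof.
rewrite /adj neighborsE !inE => /or3P [] /eqP ->;
  case: k; case: f => [[x y] []]; rewrite /= /fX /fY /fZ /=; lia.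
Qed.

Lemma path_ivt k (S : {fset face}) f s v :
  path adj f s ->
  (key k f <= v <= key k (last f s)) \/ (key k (last f s) <= v <= key k f) ->
  exists2 g, g \in f :: s & key k g = v.
Proof.
elim: s f => [|h s IH] f /=.
  by move=> _ H; exists f; rewrite ?mem_head //; lia.
move=> /andP [afh ph] H.
case: (eqVneq (key k f) v) => [e|ne]; first by exists f; rewrite ?mem_head.
have := adj_key k afh => hk.
have [g gin gv] : exists2 g, g \in h :: s & key k g = v.
  apply: IH => //; lia.
by exists g => //; rewrite inE gin orbT.
Qed.

Record prm := Prm { px0 : int; px1 : int; py0 : int; py1 : int; pz0 : int; pz1 : int }.

Definition inbox (p : prm) (f : face) : Prop :=
  [/\ (px0 p <= fX f <= px1 p), (py0 p <= fY f <= py1 p) & (pz0 p <= fZ f <= pz1 p)].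

Definition g1 p := pz0 p - px0 p - py0 p.
Definition g2 p := px1 p + py0 p + 1 - pz0 p.
Definition g3 p := pz1 p - px1 p - py0 p.
Definition g4 p := px1 p + py1 p + 1 - pz1 p.
Definition g5 p := pz1 p - px0 p - py1 p.
Definition g6 p := px0 p + py1 p + 1 - pz0 p.

Definition valid p := 0 <= g1 p /\ 0 <= g2 p /\ 0 <= g3 p /\ 0 <= g4 p /\ 0 <= g5 p /\ 0 <= g6 p.

Definition klo k p := match k with FX => px0 p | FY => py0 p | FZ => pz0 p end.
Definition khi k p := match k with FX => px1 p | FY => py1 p | FZ => pz1 p end.
Definition kn k p : nat := absz (khi k p - klo k p + 1).

Ltac unb := rewrite /inbox /valid /g1 /g2 /g3 /g4 /g5 /g6 /klo /khi /kn /= /fX /fY /fZ /=.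

Lemma box_convex k p f g : inbox p f -> inbox p g -> key k f = key k g ->
  pos k f < pos k g -> inbox p (suc k f) /\ inbox p (prd k g).
Proof.
case: k; case: f => [[x y] []]; case: g => [[x' y'] []]; unb;
  move=> [h1 h2 h3] [h4 h5 h6] e lt; (split; split); lia.
Qed.

Lemma box_key_range k p f : inbox p f -> klo k p <= khi k p ->
  klo k p <= key k f < klo k p + (kn k p)%:Z.
Proof. case: k; case: f => [[x y] o]; unb; move=> [h1 h2 h3]; case: o h3 => /= h3; lia. Qed.

Definition ksum p : nat := (kn FX p + kn FY p + kn FZ p)%N.

Lemma box_perim_le (S : {fset face}) p :
  (forall f, f \in S <-> inbox p f) ->
  px0 p <= px1 p -> py0 p <= py1 p -> pz0 p <= pz1 p ->
  (edge_perimeter S <= ksum p)%N.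
Proof.
move=> hS hx hy hz.
have H k : klo k p <= khi k p -> (\sum_(f <- S) out k S f <= 2 * kn k p)%N.
  move=> hk; apply: fam_upper.
    by move=> f /hS fb; apply: box_key_range.
  move=> v; apply: strip_le2 => f g /hS fS /hS gS e lt.
  by have [a b] := box_convex fS gS e lt; split; apply/hS.
have := perim2 S; rewrite /ksum => e.
have := leq_add (leq_add (H FX hx) (H FY hy)) (H FZ hz).
rewrite -e -!mulnDr; lia.
Qed.

Lemma conn_strips k (S : {fset face}) p flo fhi :
  edge_connected S -> flo \in S -> fhi \in S ->
  key k flo = klo k p -> key k fhi = khi k p -> klo k p <= khi k p ->
  forall i : nat, (i < kn k p)%N -> exists2 f, f \in S & key k f = klo k p + i%:Z.
Proof.
move=> hc hlo hhi elo ehi hle i hi.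
have [s [ps ls als]] := hc _ _ hlo hhi.
have hv : key k flo <= klo k p + i%:Z <= key k (last flo s).
  rewrite ls elo ehi; move: hi; rewrite /kn; lia.
have [g gin gv] := @path_ivt k S flo s (klo k p + i%:Z) ps (or_introl hv).
exists g => //; move: gin; rewrite inE => /orP [/eqP -> //|]; by move/(allP als).
Qed.

Lemma perim_lower (S : {fset face}) p :
  (forall f, f \in S -> inbox p f) ->
  px0 p <= px1 p -> py0 p <= py1 p -> pz0 p <= pz1 p ->
  (forall k (i : nat), (i < kn k p)%N -> exists2 f, f \in S & key k f = klo k p + i%:Z) ->
  (ksum p <= edge_perimeter S)%N.
Proof.
move=> hS hx hy hz hn.
have H k : klo k p <= khi k p -> (2 * kn k p <= \sum_(f <- S) out k S f)%N.
  move=> hk; apply: fam_lower; last exact: hn.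
  by move=> f /hS fb; apply: box_key_range.
have := perim2 S; rewrite /ksum => e.
have := leq_add (leq_add (H FX hx) (H FY hy)) (H FZ hz).
rewrite -e -!mulnDr; lia.
Qed.

Lemma col_le k (S : {fset face}) v L U : L <= U + 1 ->
  (forall f, f \in S -> key k f = v -> L <= pos k f <= U) ->
  (count (fun f => key k f == v) S <= absz (U - L + 1)%R)%N.
Proof.
move=> hLU hS; set T := [seq f <- S | key k f == v].
rewrite -size_filter -/T.
have hT f : f \in T -> f \in S /\ key k f = v.
  by rewrite mem_filter => /andP [/eqP ? ?].
have u : uniq [seq absz (pos k f - L) | f <- T].
  rewrite map_inj_in_uniq ?filter_uniq ?fset_uniq // => f g /hT [fS fv] /hT [gS gv] e.
  have := hS _ fS fv; have := hS _ gS gv => h1 h2.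
  apply: (@key_pos_inj k); first by rewrite fv gv.
  lia.
have sub : {subset [seq absz (pos k f - L) | f <- T] <= iota 0 (absz (U - L + 1))}.
  move=> i /mapP [f /hT [fS fv] ->]; rewrite mem_iota /=.
  have := hS _ fS fv; lia.
by have := uniq_leq_size u sub; rewrite size_map size_iota.
Qed.

Lemma col_ge k (S : {fset face}) v L U : L <= U + 1 ->
  (forall w, L <= w <= U -> exists f, [/\ f \in S, key k f = v & pos k f = w]) ->
  (absz (U - L + 1)%R <= count (fun f => key k f == v) S)%N.
Proof.
move=> hLU hS; set T := [seq f <- S | key k f == v].
rewrite -size_filter -/T.
have sub : {subset iota 0 (absz (U - L + 1)) <= [seq absz (pos k f - L) | f <- T]}.
  move=> i; rewrite mem_iota /= => hi.
  have hw : L <= L + i%:Z <= U by lia.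
  have [f [fS fv fw]] := hS (L + i%:Z) hw.
  by apply/mapP; exists f; [rewrite mem_filter fv eqxx | rewrite fw; lia].
by have := uniq_leq_size (iota_uniq 0 (absz (U - L + 1))) sub; rewrite size_iota size_map.
Qed.

Definition cnt p (i : nat) : int :=
  if (i%:Z < g1 p) && (i%:Z < g5 p) then 2 * g6 p + 2 * i%:Z + 1
  else if (g1 p <= i%:Z) && (g5 p <= i%:Z) then 2 * (g1 p + g2 p + g3 p) - 2 * i%:Z - 1
  else if i%:Z < g5 p then 2 * (py1 p - py0 p + 1) else 2 * (pz1 p - pz0 p + 1).

Definition colc p (v w : int) : Prop :=
  (2 * py0 p + v <= w <= 2 * py1 p + v + 1) /\ (2 * pz0 p - v - 1 <= w <= 2 * pz1 p - v).

Lemma regionLU p (i : nat) : valid p -> (i < kn FX p)%N ->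
  exists L U, [/\ cnt p i = U - L + 1, L <= U + 1 &
     forall w, (L <= w <= U) <-> colc p (px0 p + i%:Z) w].
Proof.
rewrite /cnt; case: (ltrP (i%:Z) (g1 p)) => h1; case: (ltrP (i%:Z) (g5 p)) => h5 /=;
  move: h1 h5; rewrite /colc; unb => h1 h5 hv hi.
- exists (2 * pz0 p - (px0 p + i%:Z) - 1), (2 * py1 p + (px0 p + i%:Z) + 1).
  split; [lia | lia | move=> w; lia].
- exists (2 * pz0 p - (px0 p + i%:Z) - 1), (2 * pz1 p - (px0 p + i%:Z)).
  split; [lia | lia | move=> w; lia].
- exists (2 * py0 p + (px0 p + i%:Z)), (2 * py1 p + (px0 p + i%:Z) + 1).
  split; [lia | lia | move=> w; lia].
- exists (2 * py0 p + (px0 p + i%:Z)), (2 * pz1 p - (px0 p + i%:Z)).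
  split; [lia | lia | move=> w; lia].
Qed.

Lemma box_col1 p f : inbox p f -> colc p (fX f) (pos FX f).
Proof. case: f => [[x y] o]; rewrite /colc; unb => -[h1 h2 h3]; case: o h3 => /= h3; lia. Qed.

Lemma box_col2 p v w : px0 p <= v <= px1 p -> colc p v w ->
  exists f, inbox p f /\ fX f = v /\ pos FX f = w.
Proof.
move=> hv hc; have e := divz_eq (w - v) 2.
have m0 : 0 <= ((w - v) %% 2)%Z by apply: modz_ge0.
have m1 : ((w - v) %% 2 < 2)%Z by apply: ltz_pmod.
move: e m0 m1; set q := ((w - v) %/ 2)%Z; set r := ((w - v) %% 2)%Z => e m0 m1.
exists (v, q, r == 0); move: hc; rewrite /colc; unb.
case: (eqVneq r 0) => [r0|r1] /= hc; split; split; lia.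
Qed.

Lemma col_exact_le (S : {fset face}) p (i : nat) : valid p -> (i < kn FX p)%N ->
  (forall f, f \in S -> inbox p f) ->
  (count (fun f => key FX f == (px0 p + i%:Z)%R) S <= absz (cnt p i))%N.
Proof.
move=> hv hi hS; have [L [U [ec hLU hw]]] := regionLU hv hi.
rewrite ec; apply: col_le => // f fS fv; apply/hw; rewrite -fv; exact: box_col1 (hS _ fS).
Qed.

Lemma col_exact_ge (S : {fset face}) p (i : nat) : valid p -> (i < kn FX p)%N ->
  (forall f, inbox p f -> f \in S) ->
  (absz (cnt p i) <= count (fun f => key FX f == (px0 p + i%:Z)%R) S)%N.
Proof.
move=> hv hi hS; have [L [U [ec hLU hw]]] := regionLU hv hi.
rewrite ec; apply: col_ge => // w /hw hc.
have hx : px0 p <= px0 p + i%:Z <= px1 p by move: hi hv; unb; lia.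
have [f [fb [fv fw]]] := box_col2 hx hc; exists f; split => //; exact: hS.
Qed.

Lemma sum_ap (a b : nat) (al be : int) : (a <= b)%N ->
  \sum_(a <= i < b) (al + 2 * be * i%:Z) =
  (b%:Z - a%:Z) * al + be * (b%:Z * (b%:Z - 1) - a%:Z * (a%:Z - 1)).
Proof.
elim: b => [|b IH].
  by rewrite leqn0 => /eqP ->; rewrite big_geq //; ring.
rewrite leq_eqVlt => /orP [/eqP ->|hab]; first by rewrite big_geq //; ring.
rewrite big_nat_recr //= IH // !intS; ring.
Qed.

Definition Fa p : int :=
  (g1 p + g2 p + g3 p) ^+ 2 - g1 p ^+ 2 - g3 p ^+ 2 - g5 p ^+ 2.

Lemma cnt_sum p : valid p -> px0 p <= px1 p ->
  \sum_(i < kn FX p) cnt p i = Fa p.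
Proof.
move=> hv hx; rewrite -(big_mkord xpredT (cnt p)).
have hn : (kn FX p)%:Z = g1 p + g2 p by move: hv hx; unb; lia.
have ha : (absz (g1 p))%:Z = g1 p by move: hv; unb; lia.
have hb : (absz (g5 p))%:Z = g5 p by move: hv; unb; lia.
have hab : (absz (g5 p) <= kn FX p)%N by move: hv hx; unb; lia.
have hab' : (absz (g1 p) <= kn FX p)%N by move: hv hx; unb; lia.
set n := kn FX p in hn hab hab' *; set a := absz (g1 p) in ha hab' *;
set b := absz (g5 p) in hb hab *.
case: (leqP a b) => hle.
- rewrite (big_cat_nat (leq0n a) (leq_trans hle hab)) (big_cat_nat hle hab) /=.
  rewrite (eq_big_nat _ _ (F2 := fun i : nat => (2 * g6 p + 1) + 2 * 1 * i%:Z)); last first.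
    move=> i /andP [_ hi]; rewrite /cnt ifT; [ring | apply/andP; split; lia].
  rewrite [X in _ + (X + _)](eq_big_nat _ _ (F2 := fun i : nat => 2 * (py1 p - py0 p + 1) + 2 * 0 * i%:Z)); last first.
    move=> i /andP [hi1 hi2]; rewrite /cnt ifF; last by apply/negbTE; rewrite negb_and -!leNgt; lia.
    rewrite ifF; last by apply/negbTE; rewrite negb_and -!ltNge; lia.
    rewrite ifT; [ring | lia].
  rewrite [X in _ + (_ + X)](eq_big_nat _ _ (F2 := fun i : nat => (2 * (g1 p + g2 p + g3 p) - 1) + 2 * (-1) * i%:Z)); last first.
    move=> i /andP [hi1 hi2]; rewrite /cnt ifF; last by apply/negbTE; rewrite negb_and -!leNgt; lia.
    rewrite ifT; [ring | apply/andP; split; lia].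
  rewrite !sum_ap // hn ha hb /Fa; move: hn; unb => _; ring.
- have hle' : (b <= a)%N by apply: ltnW.
  rewrite (big_cat_nat (leq0n b) (leq_trans hle' hab')) (big_cat_nat hle' hab') /=.
  rewrite (eq_big_nat _ _ (F2 := fun i : nat => (2 * g6 p + 1) + 2 * 1 * i%:Z)); last first.
    move=> i /andP [_ hi]; rewrite /cnt ifT; [ring | apply/andP; split; lia].
  rewrite [X in _ + (X + _)](eq_big_nat _ _ (F2 := fun i : nat => 2 * (pz1 p - pz0 p + 1) + 2 * 0 * i%:Z)); last first.
    move=> i /andP [hi1 hi2]; rewrite /cnt ifF; last by apply/negbTE; rewrite negb_and -!leNgt; lia.
    rewrite ifF; last by apply/negbTE; rewrite negb_and -!ltNge; lia.
    rewrite ifF; [ring | apply/negbTE; rewrite -leNgt; lia].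
  rewrite [X in _ + (_ + X)](eq_big_nat _ _ (F2 := fun i : nat => (2 * (g1 p + g2 p + g3 p) - 1) + 2 * (-1) * i%:Z)); last first.
    move=> i /andP [hi1 hi2]; rewrite /cnt ifF; last by apply/negbTE; rewrite negb_and -!leNgt; lia.
    rewrite ifT; [ring | apply/andP; split; lia].
  rewrite !sum_ap // hn ha hb /Fa; move: hn; unb => _; ring.
Qed.

Lemma cnt_ge0 p (i : nat) : valid p -> (i < kn FX p)%N -> 0 <= cnt p i.
Proof. move=> hv hi; have [L [U [ec hLU _]]] := regionLU hv hi; rewrite ec; lia. Qed.

Lemma area_cols (S : {fset face}) p : px0 p <= px1 p -> (forall f, f \in S -> inbox p f) ->
  (#|` S| = \sum_(i < kn FX p) count (fun f => key FX f == (px0 p + i%:Z)%R) S)%N.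
Proof.
move=> hx hS; rewrite card_fset_sum1 (sum_strips (fun _ => 1%N) (k := FX) (lo := px0 p) (n := kn FX p)).
  by apply: eq_bigr => i _; rewrite sum1_count.
by move=> f /hS fb; apply: (box_key_range (k:=FX) fb hx).
Qed.

Lemma area_le (S : {fset face}) p : valid p -> px0 p <= px1 p ->
  (forall f, f \in S -> inbox p f) -> (#|` S|%:Z <= Fa p).
Proof.
move=> hv hx hS; rewrite (area_cols hx hS) -(cnt_sum hv hx) -natz natr_sum.
apply: ler_sum => i _; rewrite natz.
have := col_exact_le hv (ltn_ord i) hS; have := cnt_ge0 hv (ltn_ord i); lia.
Qed.

Lemma area_eq (S : {fset face}) p : valid p -> px0 p <= px1 p ->
  (forall f, f \in S <-> inbox p f) -> (#|` S|%:Z = Fa p).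
Proof.
move=> hv hx hS.
have hS1 f : f \in S -> inbox p f by move/hS.
have hS2 f : inbox p f -> f \in S by move/hS.
rewrite (area_cols hx hS1) -(cnt_sum hv hx) -natz natr_sum.
apply: eq_bigr => i _; rewrite natz.
have := col_exact_le hv (ltn_ord i) hS1; have := col_exact_ge hv (ltn_ord i) hS2.
have := cnt_ge0 hv (ltn_ord i); lia.
Qed.

Ltac l3 := intros; repeat match goal with H : and3 _ _ _ |- _ => destruct H end; (match goal with |- and3 _ _ _ => constructor; lia | _ => lia end).

Lemma adj_sym f g : adj f g -> adj g f.
Proof.
rewrite /adj !neighborsE !inE; case: f => [[x y] []]; case: g => [[x' y'] []] /=;
  rewrite /dnf /upf ?xpair_eqE; move=> /or3P [] /andP [/andP [/eqP h1 /eqP h2] //] _;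
  apply/or3P; (try by constructor 1; rewrite ?eqxx ?h1 ?h2 //=; apply/andP; split; apply/eqP; lia);
  (try by constructor 2; apply/andP; split; [apply/andP; split|]; apply/eqP; lia);
  (try by constructor 3; apply/andP; split; [apply/andP; split|]; apply/eqP; lia).
Qed.

Definition conn (S : {fset face}) f g :=
  exists s, [/\ path adj f s, last f s = g & all (fun h => h \in S) s].

Lemma conn_refl S f : conn S f f.
Proof. by exists [::]. Qed.

Lemma conn_trans S f g h : conn S f g -> conn S g h -> conn S f h.
Proof.
move=> [s [ps ls as1]] [t [pt lt at1]]; exists (s ++ t).
by rewrite cat_path last_cat ls ps pt lt all_cat as1 at1.
Qed.

Lemma conn_step S f g : adj f g -> g \in S -> conn S f g.
Proof. by move=> a gS; exists [:: g]; rewrite /= a gS. Qed.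

Lemma conn_sym S f g : f \in S -> conn S f g -> conn S g f.
Proof.
move=> fS [s [ps <- as1]]; elim: s f fS ps as1 => [|h s IH] f fS /=.
  by move=> _ _; apply: conn_refl.
move=> /andP [afh phs] /andP [hS as1].
apply: conn_trans (IH h hS phs as1) _; apply: conn_step fS; exact: adj_sym.
Qed.

Definition fbase p : face :=
  if g1 p == 0 then upf (px0 p) (py0 p) else dnf (px0 p) (pz0 p - px0 p - 1).

Lemma box_moves p f : valid p -> inbox p f ->
  [\/ f = fbase p, inbox p (prd FX f), (f.2 /\ inbox p (nX f)) |
      (~~ f.2 /\ inbox p (nY f) /\ inbox p (nX (nY f)))].
Proof.
rewrite /fbase; case: f => [[x y] []]; case: eqP => g10; move: g10; unb => g10 hv [h1 h2 h3].
- case: (eqVneq x (px0 p)) => ex; last by constructor 3; split=> //; split; lia.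
  case: (eqVneq y (py0 p)) => ey; first by constructor 1; rewrite ex ey.
  by constructor 2; split; lia.
- case: (eqVneq x (px0 p)) => ex; last by constructor 3; split=> //; split; lia.
  by constructor 2; split; lia.
- case: (ltrP (pz0 p) (x + y + 1)) => hz; first by constructor 2; split; lia.
  by constructor 4; split=> //; split; split; lia.
- case: (ltrP (pz0 p) (x + y + 1)) => hz; first by constructor 2; split; lia.
  case: (eqVneq x (px0 p)) => ex.
    by constructor 1; rewrite /dnf ex; congr (_, _, _); lia.
  by constructor 4; split=> //; split; split; lia.
Qed.

Definition mu p f : int := 2 * (fX f - px0 p) + fY f + fZ f - 2 * py0 p - px0 p.

Lemma box_conn (S : {fset face}) p : valid p -> (forall f, f \in S <-> inbox p f) ->
  edge_connected S.
Proof.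
move=> hv hS.
have main n : forall f, inbox p f -> (absz (mu p f) <= n)%N -> conn S f (fbase p).
  elim: n => [|n IH] f fb hn.
  - case: (box_moves hv fb) => [->|h|[o h]|[o [h1 h2]]]; first exact: conn_refl.
    + exfalso; move: fb h hn; rewrite /mu; case: f => [[x y] []] /=; unb; l3.
    + exfalso; move: fb h hn; rewrite /mu; case: f o => [[x y] []] //= _; unb; l3.
    + exfalso; move: fb h1 h2 hn; rewrite /mu; case: f o => [[x y] []] //= _; unb; l3.
  - case: (box_moves hv fb) => [->|h|[o h]|[o [h1 h2]]]; first exact: conn_refl.
    + have c1 : conn S f (prd FX f).
        apply: conn_step; last by apply/hS.
        by rewrite /adj neighborsE; case: f {fb hn h} => [[x y] []]; rewrite !inE eqxx ?orbT.
      apply: conn_trans c1 (IH _ h _).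
      move: fb h hn; rewrite /mu; case: f => [[x y] []] /=; unb; l3.
    + have c1 : conn S f (nX f).
        apply: conn_step; last by apply/hS.
        by rewrite /adj neighborsE !inE eqxx ?orbT.
      apply: conn_trans c1 (IH _ h _).
      move: fb h hn; rewrite /mu; case: f o => [[x y] []] //= _; unb; l3.
    + have c1 : conn S f (nY f).
        apply: conn_step; last by apply/hS.
        by rewrite /adj neighborsE !inE eqxx ?orbT.
      have c2 : conn S (nY f) (nX (nY f)).
        apply: conn_step; last by apply/hS.
        by rewrite /adj neighborsE !inE eqxx ?orbT.
      apply: conn_trans c1 (conn_trans c2 (IH _ h2 _)).
      clear c2; move: fb h1 h2 hn; rewrite /mu; case: f o => [[x y] []] //= _; unb; l3.
have hc f : f \in S -> conn S f (fbase p) by move=> /hS fb; exact: main _ _ fb (leqnn _).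
move=> f g fS gS; have := conn_trans (hc f fS) (conn_sym _ (hc g gS)).
by move=> /(_ gS) [s hs]; exists s.
Qed.

Definition qparams (d a b c : nat) : prm :=
  Prm 0 (d%:Z - b%:Z - 1) 0 (d%:Z - c%:Z - 1) a%:Z (d%:Z - 1).

Lemma Tset_box d a b c f : (b <= d)%N -> (c <= d)%N ->
  f \in Tset d a b c <-> inbox (qparams d a b c) f.
Proof.
move=> hb hc; rewrite /Tset inE /Tface_seq; case: f => [[x y] o]; split.
- move=> /flatten_mapP [i]; rewrite mem_iota => /andP [_ hi] /flatten_mapP [j].
  rewrite mem_iota => /andP [_ hj] /mapP [o' ]; rewrite mem_filter => /andP [ht _] [ex ey eo].
  rewrite ex ey eo; move: ht; rewrite /inT; unb; case: (o') => /= ht; split; lia.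
- unb => -[h1 h2 h3].
  apply/flatten_mapP; exists (absz x); first by rewrite mem_iota; lia.
  apply/flatten_mapP; exists (absz y); first by rewrite mem_iota; lia.
  apply/mapP; exists o; last by congr (_, _, _); lia.
  have ht : inT d a b c `|x| `|y| o by rewrite /inT; case: o h3 => /= h3; lia.
  case: o {h3} ht => ->; first by rewrite inE.
  by case: ifP; rewrite !inE.
Qed.
Notation frot := Defs.rot (only parsing).

Definition rotP q := Prm (- py1 q - 1) (- py0 q - 1) (pz0 q) (pz1 q) (px0 q) (px1 q).
Definition reflP q := Prm (py0 q) (py1 q) (px0 q) (px1 q) (pz0 q) (pz1 q).
Definition trP (s t : int) q :=
  Prm (px0 q + s) (px1 q + s) (py0 q + t) (py1 q + t) (pz0 q + s + t) (pz1 q + s + t).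
Definition symP n b s t q := trP s t (iter n rotP (if b then reflP q else q)).

Lemma rot_box q g : inbox (rotP q) (frot g) <-> inbox q g.
Proof. case: g => [[x y] []]; rewrite /Defs.rot /dnf /upf; unb; split; l3. Qed.
Lemma refl_box q g : inbox (reflP q) (refl g) <-> inbox q g.
Proof. case: g => [[x y] []]; rewrite /refl; unb; split; l3. Qed.
Lemma tr_box s t q g : inbox (trP s t q) (transl s t g) <-> inbox q g.
Proof. case: g => [[x y] []]; rewrite /transl; unb; split; l3. Qed.

Lemma sym_box n b s t q g : inbox (symP n b s t q) (lattice_sym n b s t g) <-> inbox q g.
Proof.
rewrite /symP /lattice_sym tr_box.
have -> : inbox q g <-> inbox (if b then reflP q else q) (if b then refl g else g).
  by case: b; rewrite ?refl_box.
elim: n => [|n IH] //=; by rewrite rot_box.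
Qed.

Lemma rot6 h : iter 6 frot h = h.
Proof. case: h => [[x y] []]; rewrite /= /dnf /upf; congr (_, _, _); ring. Qed.

Lemma rot_inj : injective frot.
Proof. by move=> f g e; rewrite -(rot6 f) -(rot6 g) !iterSr e. Qed.

Lemma lsym_inj n b s t : injective (lattice_sym n b s t).
Proof.
move=> f g; rewrite /lattice_sym => e.
have e2 : iter n frot (if b then refl f else f) = iter n frot (if b then refl g else g).
  move: e; case: (iter n frot _) => [[x y] o]; case: (iter n frot _) => [[x' y'] o'].
  by rewrite /transl => -[h1 h2 ->]; congr (_, _, _); lia.
have e3 : (if b then refl f else f) = (if b then refl g else g).
  by clear e; elim: n e2 => [|n IH] //= /rot_inj /IH.
clear e e2; case: b e3 => // ; case: f => [[x y] o]; case: g => [[x' y'] o'] /= [-> -> ->] //.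
Qed.

Lemma lsym_surj n b s t f : exists g, f = lattice_sym n b s t g.
Proof.
pose h := transl (- s) (- t) f.
have r6 m : iter (6 * m) frot h = h.
  by elim: m => [|m IH] //; rewrite mulnS iterD rot6 IH.
pose g0 := iter (5 * n) frot h.
exists (if b then refl g0 else g0); rewrite /lattice_sym.
have -> : (if b then refl (if b then refl g0 else g0) else (if b then refl g0 else g0)) = g0.
  by case: b => //; rewrite /refl; case: g0 => [[x y] o].
rewrite /g0 -iterD -[(n + 5 * n)%N]/(6 * n)%N; last first.
rewrite r6 /h; case: f {h r6 g0} => [[x y] o] /=; congr (_, _, _); ring.
Qed.
Definition tup := (int * int * int * int * int * int)%type.
Definition rotT (t : tup) : tup := let: (a1, a2, a3, a4, a5, a6) := t in (a6, a1, a2, a3, a4, a5).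
Definition reflT (t : tup) : tup := let: (a1, a2, a3, a4, a5, a6) := t in (a1, a6, a5, a4, a3, a2).
Definition hexT (d a b c : int) : tup := (a, d - a - b, b, d - b - c, c, d - c - a).

Definition qdat (r : int) (m : nat) : int * int * int * int :=
  match m with
  | 0 => (3 * r, r, r, r)
  | 1 => (3 * r, r - 1, r, r)
  | 2 => (3 * r + 1, r, r, r + 1)
  | 3 => (3 * r + 1, r, r, r)
  | 4 => (3 * r + 2, r, r + 1, r + 1)
  | _ => (3 * r + 2, r, r, r + 1)
  end.
Definition qT r m := let: (d, a, b, c) := qdat r m in hexT d a b c.

Definition Aint (r : int) (m : nat) : int :=
  if m == 0%N then 6 * r ^+ 2 else 6 * r ^+ 2 + 2 * m%:Z * r + m%:Z - 2.

Ltac fin_sym := split; [done | rewrite /qT /= /hexT /=; congr (_, _, _, _, _, _); lia].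
Ltac try_sym :=
  first [ exists 0%N, false; fin_sym | exists 1%N, false; fin_sym | exists 2%N, false; fin_sym
        | exists 3%N, false; fin_sym | exists 4%N, false; fin_sym | exists 5%N, false; fin_sym
        | exists 0%N, true; fin_sym | exists 1%N, true; fin_sym | exists 2%N, true; fin_sym
        | exists 3%N, true; fin_sym | exists 4%N, true; fin_sym | exists 5%N, true; fin_sym ].

Definition cval (m : nat) : int :=
  match m with 0 => 0 | 1 => 7 | 2 => 4 | 3 => 3 | 4 => 4 | _ => 7 end.

Lemma Aint_eq r m : (m <= 5)%N -> 6 * Aint r m = (6 * r + m%:Z) ^+ 2 - cval m.
Proof. rewrite /Aint; case: m => [|[|[|[|[|[|m]]]]]] //= _; ring. Qed.

Lemma slack_lemma (K k F A e p1 p2 cv : int) : 6 <= K -> 0 <= k <= K ->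
  k ^+ 2 - 6 * F = 3 * e ^+ 2 + 2 * (p1 ^+ 2 + p2 ^+ 2 + (p1 + p2) ^+ 2) ->
  6 * A = K ^+ 2 - cv -> 0 <= cv <= 7 -> A <= F ->
  [/\ k = K, 6 * (F - A) = cv - (3 * e ^+ 2 + 2 * (p1 ^+ 2 + p2 ^+ 2 + (p1 + p2) ^+ 2)),
      -1 <= e <= 1, -1 <= p1 <= 1 & -1 <= p2 <= 1].
Proof.
move=> hK hk id hA hc hAF.
have s0 : 0 <= 3 * e ^+ 2 + 2 * (p1 ^+ 2 + p2 ^+ 2 + (p1 + p2) ^+ 2).
  clear; rewrite !expr2; nia.
have kK : k = K.
  case: (ltrP k K) => lt; last by lia.
  have : k ^+ 2 <= (K - 1) ^+ 2 by move: hk lt; clear; rewrite !expr2; nia.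
  move: id hA hAF s0; rewrite !expr2; nia.
subst k.
have sl : 3 * e ^+ 2 + 2 * (p1 ^+ 2 + p2 ^+ 2 + (p1 + p2) ^+ 2) <= cv.
  move: id hA hAF; move: (K ^+ 2) => K2; lia.
split => //.
- move: id hA; move: (K ^+ 2) => K2; lia.
- have := sqr_ge0 p1; have := sqr_ge0 p2; have := sqr_ge0 (p1 + p2); move: sl hc.
  move: (p1 ^+ 2) (p2 ^+ 2) ((p1 + p2) ^+ 2) => x2 x3 x4 sl hc h1 h2 h3.
  have : e ^+ 2 <= 2 by lia.
  rewrite expr2; nia.
- have := sqr_ge0 e; have := sqr_ge0 p2; have := sqr_ge0 (p1 + p2); move: sl hc.
  move: (e ^+ 2) (p2 ^+ 2) ((p1 + p2) ^+ 2) => x2 x3 x4 sl hc h1 h2 h3.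
  have : p1 ^+ 2 <= 3 by lia.
  rewrite expr2; nia.
- have := sqr_ge0 e; have := sqr_ge0 p1; have := sqr_ge0 (p1 + p2); move: sl hc.
  move: (e ^+ 2) (p1 ^+ 2) ((p1 + p2) ^+ 2) => x2 x3 x4 sl hc h1 h2 h3.
  have : p2 ^+ 2 <= 3 by lia.
  rewrite expr2; nia.
Qed.

Lemma classify (r : int) (m : nat) (a b c d : int) : 1 <= r -> (m <= 5)%N ->
  0 <= a -> 0 <= b -> 0 <= c -> 0 <= d - a - b -> 0 <= d - b - c -> 0 <= d - c - a ->
  3 * d - a - b - c <= 6 * r + m%:Z ->
  Aint r m <= d ^+ 2 - a ^+ 2 - b ^+ 2 - c ^+ 2 ->
  d ^+ 2 - a ^+ 2 - b ^+ 2 - c ^+ 2 = Aint r m /\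
  exists n bb, (n <= 5)%N /\ hexT d a b c = iter n rotT (if bb then reflT (qT r m) else qT r m).
Proof.
move=> hr hm ha hb hc h1 h2 h3 hk hA.
have hAe := Aint_eq r hm.
have hcv : 0 <= cval m <= 7 by case: m {hm hk hA hAe} => [|[|[|[|[|[|m]]]]]].
have id : (3 * d - a - b - c) ^+ 2 - 6 * (d ^+ 2 - a ^+ 2 - b ^+ 2 - c ^+ 2) =
  3 * (d - (a + b + c)) ^+ 2 + 2 * ((a - b) ^+ 2 + (b - c) ^+ 2 + ((a - b) + (b - c)) ^+ 2)
  by ring.
have hK : 6 <= 6 * r + m%:Z by move: hr; clear; lia.
have hk0 : 0 <= 3 * d - a - b - c <= 6 * r + m%:Z by move: hk ha hb hc h1 h2 h3; clear; lia.
have [kK hFA he hp1 hp2] := slack_lemma hK hk0 id hAe hcv hA.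
clear id hAe.
move: hFA he hp1 hp2 hA; rewrite !expr2.
move: (d * d - a * a - b * b - c * c) (Aint r m) => F A.
move Ee: (d - (a + b + c)) => e; move Ep1: (a - b) => p1; move Ep2: (b - c) => p2.
move=> hFA he hp1 hp2 hA.
have {hFA} hFA : 6 * (F - A) = cval m - (3 * (e * e) + 2 * (p1 * p1 + p2 * p2 + (p1 + p2) * (p1 + p2))).
  by rewrite hFA -Ee -Ep1 -Ep2.
have : e = -1 \/ e = 0 \/ e = 1 by lia.
have : p1 = -1 \/ p1 = 0 \/ p1 = 1 by lia.
have : p2 = -1 \/ p2 = 0 \/ p2 = 1 by lia.
move=> C2 C1 C0; clear he hp1 hp2.
clear hK hk0; case: m hm kK hFA hk hcv => [|[|[|[|[|[|m]]]]]] // _ kK hFA hk hcv;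
  case: C0 => [E0|[E0|E0]]; case: C1 => [E1|[E1|E1]]; case: C2 => [E2|[E2|E2]];
  rewrite E0 E1 E2 /cval /= in hFA;
  first [ exfalso; lia | split; [lia | try_sym] ].
Qed.

Lemma fZ_bounds f : fX f + fY f <= fZ f <= fX f + fY f + 1.
Proof. case: f => [[x y] []]; rewrite /fX /fY /fZ /=; lia. Qed.

Lemma seq_min (T : eqType) (h : T -> int) (s : seq T) x0 : x0 \in s ->
  exists2 x, x \in s & forall y, y \in s -> h x <= h y.
Proof.
elim: s x0 => [|z s IH] x0 //.
case: s IH => [|w s] IH _.
  by exists z; [rewrite mem_head | move=> y; rewrite inE => /eqP ->].
have [m ms hm] := IH w (mem_head _ _).
case: (lerP (h z) (h m)) => c.
  exists z; first exact: mem_head.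
  by move=> y; rewrite inE => /orP [/eqP -> // | /hm]; lia.
exists m; first by rewrite inE ms orbT.
by move=> y; rewrite inE => /orP [/eqP -> | /hm //]; lia.
Qed.

Lemma seq_max (T : eqType) (h : T -> int) (s : seq T) x0 : x0 \in s ->
  exists2 x, x \in s & forall y, y \in s -> h y <= h x.
Proof.
move=> /(seq_min (fun x => - h x)) [x xs hx]; exists x => // y /hx; lia.
Qed.

Definition gl p : tup := (g1 p, g2 p, g3 p, g4 p, g5 p, g6 p).

Lemma gl_rot q : gl (rotP q) = rotT (gl q).
Proof. rewrite /gl /rotT; unb; congr (_, _, _, _, _, _); lia. Qed.
Lemma gl_refl q : gl (reflP q) = reflT (gl q).
Proof. rewrite /gl /reflT; unb; congr (_, _, _, _, _, _); lia. Qed.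
Lemma gl_iter n q : gl (iter n rotP q) = iter n rotT (gl q).
Proof. by elim: n => [|n IH] //=; rewrite gl_rot IH. Qed.

Lemma final_qr (P Q : {fset face}) q pP n bb :
  (forall f, f \in Q <-> inbox q f) -> (forall f, f \in P -> inbox pP f) ->
  #|` P| = #|` Q| -> gl pP = iter n rotT (if bb then reflT (gl q) else gl q) ->
  exists s t, P = [fset lattice_sym n bb s t f | f in Q]%fset.
Proof.
move=> hQ hP hc hg.
set q' := iter n rotP (if bb then reflP q else q).
have gif b : gl (if b then reflP q else q) = if b then reflT (gl q) else gl q.
  by case: b; rewrite ?gl_refl.
have hg' : gl q' = gl pP by rewrite hg /q' gl_iter gif.
exists (px0 pP - px0 q'), (py0 pP - py0 q').
have hs : symP n bb (px0 pP - px0 q') (py0 pP - py0 q') q = pP.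
  rewrite /symP -/q'; move: hg'; rewrite /gl /trP; case: pP {hP hg} => a1 a2 a3 a4 a5 a6.
  case: q' => b1 b2 b3 b4 b5 b6; unb => -[e1 e2 e3 e4 e5 e6]; congr Prm; lia.
have hI f : f \in [fset lattice_sym n bb (px0 pP - px0 q') (py0 pP - py0 q') g | g in Q]%fset
              <-> inbox pP f.
  split.
    by move=> /imfsetP [g /= gQ ->]; rewrite -[X in inbox X _]hs; apply/sym_box/hQ.
  have [g ->] := lsym_surj n bb (px0 pP - px0 q') (py0 pP - py0 q') f.
  rewrite -[X in inbox X _]hs => /sym_box /hQ gQ; apply/imfsetP; by exists g.
apply/eqP; rewrite eqEfcard; apply/andP; split.
  by apply/fsubsetP => f fP; apply/hI; exact: hP.
by rewrite card_imfset ?hc //; exact: lsym_inj.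
Qed.

Definition qnat (r m : nat) : nat * nat * nat * nat :=
  match m with
  | 0 => (3 * r, r, r, r)
  | 1 => (3 * r, r.-1, r, r)
  | 2 => ((3 * r).+1, r, r, r.+1)
  | 3 => ((3 * r).+1, r, r, r)
  | 4 => ((3 * r).+2, r, r.+1, r.+1)
  | _ => ((3 * r).+2, r, r, r.+1)
  end.

Lemma qrhexE r m : qrhex r m = Tset (qnat r m).1.1.1 (qnat r m).1.1.2 (qnat r m).1.2 (qnat r m).2.
Proof. by case: m => [|[|[|[|[|[|m]]]]]]. Qed.

Lemma areaA_int (r m : nat) : (1 <= r)%N -> (m <= 5)%N -> (areaA r m)%:Z = Aint r%:Z m.
Proof.
rewrite /areaA /Aint => hr; case: m => [|[|[|[|[|[|m]]]]]] //= _;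
  rewrite ?expr2 (_ : (r ^ 2 = r * r)%N) ?mulnn //; nia.
Qed.

Lemma qnat_facts (r m : nat) : (1 <= r)%N -> (m <= 5)%N ->
  let: (d, a, b, c) := qnat r m in
  (b < d)%N /\ (c < d)%N /\ (a < d)%N /\ (a + b <= d)%N /\ (b + c <= d)%N /\ (c + a <= d)%N /\
      d%:Z ^+ 2 - a%:Z ^+ 2 - b%:Z ^+ 2 - c%:Z ^+ 2 = Aint r%:Z m /\
      (3 * d - a - b - c = 6 * r + m)%N /\
      hexT d%:Z a%:Z b%:Z c%:Z = qT r%:Z m.
Proof.
move=> hr; case: m => [|[|[|[|[|[|m]]]]]] //= _; rewrite /Aint /qT /hexT /=;
  (split; [lia|split; [lia|split; [lia|split; [lia|split; [lia|split; [lia|split;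
     [rewrite !expr2 | split; [lia | congr (_, _, _, _, _, _); lia]]]]]]]]);
  rewrite ?PoszM ?intS; try (rewrite (_ : (r.-1 : int) = r%:Z - 1); last by lia); ring.
Qed.

Lemma qparams_valid (d a b c : nat) : (b < d)%N -> (c < d)%N -> (a < d)%N ->
  (a + b <= d)%N -> (b + c <= d)%N -> (c + a <= d)%N ->
  [/\ valid (qparams d a b c), px0 (qparams d a b c) <= px1 (qparams d a b c),
      py0 (qparams d a b c) <= py1 (qparams d a b c) &
      pz0 (qparams d a b c) <= pz1 (qparams d a b c)].
Proof. rewrite /qparams; unb => *; split; lia. Qed.

Lemma Tset_props (d a b c : nat) : (b < d)%N -> (c < d)%N -> (a < d)%N ->
  (a + b <= d)%N -> (b + c <= d)%N -> (c + a <= d)%N ->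
  [/\ polyiamond (Tset d a b c),
      (area (Tset d a b c))%:Z = d%:Z ^+ 2 - a%:Z ^+ 2 - b%:Z ^+ 2 - c%:Z ^+ 2 &
      (edge_perimeter (Tset d a b c) <= 3 * d - a - b - c)%N].
Proof.
move=> h1 h2 h3 h4 h5 h6.
have [hv hx hy hz] := qparams_valid h1 h2 h3 h4 h5 h6.
have hm f : f \in Tset d a b c <-> inbox (qparams d a b c) f.
  by apply: Tset_box; apply: ltnW.
split.
- split; last exact: box_conn hv hm.
  apply/fset0Pn; exists (fbase (qparams d a b c)); apply/hm.
  move: hv hx hy hz; rewrite /fbase; case: eqP; unb => /= *; split; lia.
- rewrite /area (area_eq hv hx hm) /Fa; unb; ring.
- apply: leq_trans (box_perim_le hm hx hy hz) _.
  rewrite /ksum /kn /qparams /=; lia.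
Qed.

Lemma gl_hex p : gl p = hexT (g1 p + g2 p + g3 p) (g1 p) (g3 p) (g5 p).
Proof. rewrite /gl /hexT; congr (_, _, _, _, _, _); unb; lia. Qed.

Lemma gl_q (d a b c : nat) : gl (qparams d a b c) = hexT d%:Z a%:Z b%:Z c%:Z.
Proof. rewrite /gl /hexT /qparams; congr (_, _, _, _, _, _); unb; lia. Qed.

Theorem lemma3p17 (r m : nat) (P : {fset face}) :
  (1 <= r)%N -> (m <= 5)%N ->
  min_perimeter_polyiamond (areaA r m) P ->
  quasi_regular P.
Proof.
move=> hr hm [[hne hconn] hA hmin].
have := qnat_facts hr hm.
have hQE := qrhexE r m.
case Eq: (qnat r m) hQE => [[[d a] b] c] /= hQE.
move=> [q1 [q2 [q3 [q4 [q5 [q6 [qA [qk qT']]]]]]]].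
have [hQpoly hQarea hQper] := Tset_props q1 q2 q3 q4 q5 q6.
have hQm f : f \in Tset d a b c <-> inbox (qparams d a b c) f by apply: Tset_box; apply: ltnW.
have hAQ : area (Tset d a b c) = areaA r m.
  have : (area (Tset d a b c))%:Z = (areaA r m)%:Z by rewrite hQarea qA areaA_int.
  lia.
have hpP : (edge_perimeter P <= 6 * r + m)%N.
  by apply: leq_trans (hmin _ hQpoly hAQ) _; rewrite -qk.
have /fset0Pn [f0 f0P] := hne.
have [fx0 fx0P hx0] := seq_min fX f0P.
have [fx1 fx1P hx1] := seq_max fX f0P.
have [fy0 fy0P hy0] := seq_min fY f0P.
have [fy1 fy1P hy1] := seq_max fY f0P.
have [fz0 fz0P hz0] := seq_min fZ f0P.
have [fz1 fz1P hz1] := seq_max fZ f0P.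
pose pP := Prm (fX fx0) (fX fx1) (fY fy0) (fY fy1) (fZ fz0) (fZ fz1).
have hPb f : f \in P -> inbox pP f.
  move=> fP; have := hx0 f fP; have := hx1 f fP; have := hy0 f fP; have := hy1 f fP;
  have := hz0 f fP; have := hz1 f fP; rewrite /inbox /=; l3.
have W w : w \in P -> inbox pP w /\ fX w + fY w <= fZ w <= fX w + fY w + 1.
  by move=> wP; split; [apply: hPb | apply: fZ_bounds].
have hv : valid pP.
  move: (W _ fx0P) (W _ fx1P) (W _ fy0P) (W _ fy1P) (W _ fz0P) (W _ fz1P).
  rewrite /valid /inbox /g1 /g2 /g3 /g4 /g5 /g6 /=.
  move=> [[? ? ?] ?] [[? ? ?] ?] [[? ? ?] ?] [[? ? ?] ?] [[? ? ?] ?] [[? ? ?] ?]; lia.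
have hxr : px0 pP <= px1 pP by apply: hx1.
have hyr : py0 pP <= py1 pP by apply: hy1.
have hzr : pz0 pP <= pz1 pP by apply: hz1.
have hn k (i : nat) : (i < kn k pP)%N -> exists2 f, f \in P & key k f = klo k pP + i%:Z.
  case: k.
  - exact: (conn_strips hconn fx0P fx1P).
  - exact: (conn_strips hconn fy0P fy1P).
  - exact: (conn_strips hconn fz0P fz1P).
have hperL := perim_lower hPb hxr hyr hzr hn.
have harea := area_le hv hxr hPb.
have hks : (ksum pP)%:Z = 3 * (g1 pP + g2 pP + g3 pP) - g1 pP - g3 pP - g5 pP.
  move: hxr hyr hzr; rewrite /ksum /kn; unb; lia.
have c1 : 1 <= r%:Z by move: hr; clear; lia.
have [c2 [c3 [c4 [c5 [c6 c7]]]]] : 0 <= g1 pP /\ 0 <= g3 pP /\ 0 <= g5 pP /\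
   0 <= (g1 pP + g2 pP + g3 pP) - g1 pP - g3 pP /\
   0 <= (g1 pP + g2 pP + g3 pP) - g3 pP - g5 pP /\
   0 <= (g1 pP + g2 pP + g3 pP) - g5 pP - g1 pP.
  by move: hv; rewrite /valid /g1 /g2 /g3 /g4 /g5 /g6; lia.
have c8 : 3 * (g1 pP + g2 pP + g3 pP) - g1 pP - g3 pP - g5 pP <= 6 * r%:Z + m%:Z.
  by rewrite -hks; move: hperL hpP; clear; lia.
have c9 : Aint r%:Z m <= Fa pP by rewrite -areaA_int // -hA.
have [_ [n [bb [_ hhex]]]] := classify c1 hm c2 c3 c4 c5 c6 c7 c8 c9.
have hPQ : #|` P| = #|` Tset d a b c| by move: hA hAQ; rewrite /area => -> ->.
have hg : gl pP = iter n rotT (if bb then reflT (gl (qparams d a b c)) else gl (qparams d a b c)).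
  by rewrite gl_hex hhex gl_q qT'.
have [s [t hP]] := final_qr hQm hPb hPQ hg.
by exists r, m, n, bb, s, t; split => //; rewrite hQE.
Qed.
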